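(* There is an absolute constant $c>0$ such that the following holds. Let $n\ge1$, $\alpha\in(0,1)$, $\beta\in(0,1/2)$, $\gamma=\sqrt\beta$, and let $D\ge D_0:=\sqrt{\alpha n}$. Let $$\mathcal{S}_D=\{x\in S^{n-1}: \mathrm{LCD}_{\alpha,\beta}(x)\in[D,2D]\text{ and } x \text{ is }(\alpha,\gamma)\text{-incompressible}\},$$ and $\nu=6\beta\sqrt n/D$. Then there exists a set $\mathcal{N}_D\subset\mathcal{S}_D$ such that every $x\in\mathcal{S}_D$ has some $y\in\mathcal{N}_D$ with $\|x-y\|_2\le\nu$, and $$|\mathcal{N}_D|\le\frac{D}{\beta}\left(\frac{cD}{\sqrt{\alpha n}}\right)^n\left(\frac1\beta\right)^{\alpha n}.$$
   Context: For $y\in\mathbb{R}^n$ write $y=[y]+\{y\}$ with $[y]\in\mathbb{Z}^n$ and $\{y\}\in[-1/2,1/2]^n$ (coordinatewise nearest-integer rounding). For $\alpha,\gamma\in(0,1)$, a unit vector $x\in S^{n-1}$ is $(\alpha,\gamma)$-compressible if $x=u+v$ where $u$ has at most $\alpha n$ nonzero coordinates and $\|v\|_2\le\gamma$; otherwise $x$ is $(\alpha,\gamma)$-incompressible. For $x\in S^{n-1}$, $\mathrm{LCD}_{\alpha,\beta}(x)$ is the infimum of all $D>0$ such that $\{Dx\}=u+v$ with $u$ having at most $\alpha n$ nonzero coordinates and $\|v\|_2\le\beta\min(D,\sqrt n)$ (infimum of the empty set being $+\infty$). *)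

(* Defs.v *)
From HB Require Import structures.
From mathcomp Require Import all_boot all_order all_algebra.
From mathcomp Require Import all_classical all_reals all_analysis.
Set Implicit Arguments. Unset Strict Implicit. Unset Printing Implicit Defensive.
Import Order.TTheory GRing.Theory Num.Theory.
Local Open Scope ring_scope.

Definition norm2 {R : realType} {n : nat} (x : 'rV[R]_n) : R :=
  Num.sqrt (\sum_(i < n) x ord0 i ^+ 2).

Definition nnz {R : realType} {n : nat} (u : 'rV[R]_n) : nat :=
  #|[set i : 'I_n | u ord0 i != 0]|.

(* Nearest integer rounding [y] := floor (y + 1/2), fractional part
   {y} := y - [y] in [-1/2, 1/2). *)
Definition rnd {R : realType} (y : R) : R := (Num.floor (y + 2^-1))%:~R.
Definition fracv {R : realType} {n : nat} (x : 'rV[R]_n) : 'rV[R]_n :=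
  \row_i (x ord0 i - rnd (x ord0 i)).

Definition on_sphere {R : realType} {n : nat} (x : 'rV[R]_n) : Prop :=
  norm2 x = 1.

Definition compressible {R : realType} {n : nat} (alpha gamma : R)
    (x : 'rV[R]_n) : Prop :=
  exists u v : 'rV[R]_n, x = u + v /\ (nnz u)%:R <= alpha * n%:R /\
                         norm2 v <= gamma.

Definition incompressible {R : realType} {n : nat} (alpha gamma : R)
    (x : 'rV[R]_n) : Prop := on_sphere x /\ ~ compressible alpha gamma x.

Definition lcd_set {R : realType} {n : nat} (alpha beta : R) (x : 'rV[R]_n)
    : set R :=
  [set D | 0 < D /\ exists u v : 'rV[R]_n,
     fracv (D *: x) = u + v /\ (nnz u)%:R <= alpha * n%:R /\
     norm2 v <= beta * Num.min D (Num.sqrt n%:R)].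

(* LCD_{alpha,beta}(x) as an extended real; inf of the empty set is +oo *)
Definition LCD {R : realType} {n : nat} (alpha beta : R) (x : 'rV[R]_n)
    : \bar R :=
  ereal_inf [set D%:E | D in lcd_set alpha beta x].

Definition S_D {R : realType} {n : nat} (alpha beta D : R) (x : 'rV[R]_n)
    : Prop :=
  [/\ on_sphere x, (D%:E <= LCD alpha beta x)%E,
      (LCD alpha beta x <= (2 * D)%:E)%E &
      incompressible alpha (Num.sqrt beta) x].

(* Main.v *)
Require Import Defs.
From HB Require Import structures.
From mathcomp Require Import all_boot all_order all_algebra.
From mathcomp Require Import all_classical all_reals all_analysis.
From mathcomp Require Import ring lra zify.
Import Order.TTheory GRing.Theory Num.Theory.
Local Open Scope ring_scope.

Section Norm.
Context {R : realType}.
Context {n : nat}.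
Implicit Types a b x : 'rV[R]_n.

Lemma sumsq_ge0 a : 0 <= \sum_(i < n) a ord0 i ^+ 2.
Proof. by apply: sumr_ge0 => i _; rewrite sqr_ge0. Qed.

Lemma norm2_ge0 a : 0 <= norm2 a.
Proof. exact: sqrtr_ge0. Qed.

Lemma norm2_sq a : norm2 a ^+ 2 = \sum_(i < n) a ord0 i ^+ 2.
Proof. by rewrite /norm2 sqr_sqrtr // sumsq_ge0. Qed.

Lemma sumsq0 a : \sum_(i < n) a ord0 i ^+ 2 = 0 -> forall i, a ord0 i = 0.
Proof.
move=> h i; apply/eqP; rewrite -sqrf_eq0; apply/eqP.
by apply: (psumr_eq0P (P := predT) _ h) => // j _; rewrite sqr_ge0.
Qed.

Lemma dot_sq a b : (\sum_(i < n) a ord0 i * b ord0 i) ^+ 2 <=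
  (\sum_(i < n) a ord0 i ^+ 2) * (\sum_(i < n) b ord0 i ^+ 2).
Proof.
set A := \sum_(i < n) a ord0 i ^+ 2; set B := \sum_(i < n) b ord0 i ^+ 2.
set d := \sum_(i < n) a ord0 i * b ord0 i.
have A0 : 0 <= A by exact: sumsq_ge0.
have B0 : 0 <= B by exact: sumsq_ge0.
have [Ae|Ane] := eqVneq A 0.
  have z := @sumsq0 a Ae.
  have -> : d = 0 by rewrite /d big1 // => i _; rewrite z mul0r.
  by rewrite expr0n /= mulr_ge0.
have Ap : 0 < A by rewrite lt_def Ane.
set t := - d / A.
have h : 0 <= \sum_(i < n) (a ord0 i * t + b ord0 i) ^+ 2.
  by apply: sumr_ge0 => i _; rewrite sqr_ge0.
have e : \sum_(i < n) (a ord0 i * t + b ord0 i) ^+ 2 = A * t ^+ 2 + 2 * d * t + B.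
  rewrite /A /d /B mulr_sumr !mulr_suml -!big_split /=.
  by apply: eq_bigr => i _; timeout 20 ring.
rewrite e /t in h.
have : 0 <= B - d ^+ 2 / A.
  move: h; rewrite !expr2; have : A != 0 by [].
  move=> An; set u := d * d / A.
  have -> : A * (- d / A * (- d / A)) + 2 * d * (- d / A) + B = B - u.
    by rewrite /u; timeout 20 field.
  by [].
rewrite subr_ge0 ler_pdivrMr //.
by rewrite mulrC.
Qed.

Lemma dot_le a b : \sum_(i < n) a ord0 i * b ord0 i <= norm2 a * norm2 b.
Proof.
set d := \sum_(i < n) _.
apply: (le_trans (ler_norm d)).
rewrite -sqrtr_sqr /norm2 -sqrtrM ?sumsq_ge0 //.
by rewrite ler_sqrt ?mulr_ge0 ?sumsq_ge0 // dot_sq.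
Qed.

Lemma norm2_triangle a b : norm2 (a + b) <= norm2 a + norm2 b.
Proof.
have h : norm2 (a + b) ^+ 2 <= (norm2 a + norm2 b) ^+ 2.
  rewrite sqrrD !norm2_sq.
  have -> : \sum_(i < n) (a + b) ord0 i ^+ 2 =
     \sum_(i < n) a ord0 i ^+ 2 + 2 * (\sum_(i < n) a ord0 i * b ord0 i) +
     \sum_(i < n) b ord0 i ^+ 2.
    rewrite mulr_sumr -!big_split /=; apply: eq_bigr => i _; rewrite mxE; timeout 20 ring.
  rewrite -[norm2 a * norm2 b *+ 2]mulr_natl lerD2r lerD2l ler_pM2l //.
  exact: dot_le.
by rewrite -(ler_pXn2r (n := 2)) // nnegrE ?addr_ge0 ?norm2_ge0.
Qed.

Lemma norm2Z c a : norm2 (c *: a) = `|c| * norm2 a.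
Proof.
rewrite /norm2 -sqrtr_sqr -sqrtrM ?sqr_ge0 // mulr_sumr; congr Num.sqrt.
by apply: eq_bigr => i _; rewrite mxE exprMn.
Qed.

Lemma norm2N a : norm2 (- a) = norm2 a.
Proof. by rewrite -scaleN1r norm2Z normrN normr1 mul1r. Qed.

Lemma norm2_sym a b : norm2 (a - b) = norm2 (b - a).
Proof. by rewrite -norm2N opprB. Qed.

Lemma norm2_le_abs a b : (forall i, `|a ord0 i| <= `|b ord0 i|) -> norm2 a <= norm2 b.
Proof.
move=> h; rewrite /norm2 ler_sqrt ?sumsq_ge0 //; apply: ler_sum => i _.
by rewrite -(real_normK (num_real (a ord0 i))) -(real_normK (num_real (b ord0 i))) lerXn2r ?nnegrE.
Qed.

Lemma norm2_const (e : R) : norm2 (\row_(i < n) e) = `|e| * Num.sqrt n%:R.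
Proof.
rewrite /norm2 (eq_bigr (fun _ => e ^+ 2)) ?sumr_const ?card_ord; last by move=> i _; rewrite mxE.
by rewrite -[_ *+ n]mulr_natr sqrtrM ?sqr_ge0 // sqrtr_sqr.
Qed.

Lemma coord_le a i : `|a ord0 i| <= norm2 a.
Proof.
rewrite -sqrtr_sqr /norm2 ler_sqrt ?sumsq_ge0 //.
by rewrite (bigD1 i) //= lerDl sumr_ge0 // => j _; rewrite sqr_ge0.
Qed.

Lemma sum_abs_le a : \sum_(i < n) `|a ord0 i| <= Num.sqrt n%:R * norm2 a.
Proof.
have := dot_le (\row_(i < n) `|a ord0 i|) (\row_(i < n) 1).
have -> : norm2 (\row_(i < n) `|a ord0 i|) = norm2 a.
  by rewrite /norm2; congr Num.sqrt; apply: eq_bigr => i _; rewrite mxE real_normK ?num_real.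
rewrite norm2_const normr1 mul1r mulrC.
by rewrite (eq_bigr (fun i => `|a ord0 i|)) // => i _; rewrite !mxE mulr1.
Qed.

End Norm.


Section Norm.
Variable R : realType.

Lemma rev_tri n (a b : 'rV[R]_n) : `|norm2 a - norm2 b| <= norm2 (a - b).
Proof.
have h1 : norm2 a <= norm2 (a - b) + norm2 b.
  by have := norm2_triangle (a - b) b; rewrite subrK.
have h2 : norm2 b <= norm2 (a - b) + norm2 a.
  by have := norm2_triangle (b - a) a; rewrite subrK norm2_sym.
rewrite ler_norml; apply/andP; split; lra.
Qed.

Lemma normalize_close n (x a : 'rV[R]_n) t e : norm2 x = 1 -> 0 < t ->
  norm2 (x - t^-1 *: a) <= e -> norm2 (x - (norm2 a)^-1 *: a) <= 2 * e.
Proof.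
move=> nx t0 h.
have e0 : 0 <= e by apply: le_trans h; exact: norm2_ge0.
have -> : x - (norm2 a)^-1 *: a = (x - t^-1 *: a) + (t^-1 - (norm2 a)^-1) *: a.
  by rewrite scalerBl addrA subrK.
apply: (le_trans (norm2_triangle _ _)).
suff : norm2 ((t^-1 - (norm2 a)^-1) *: a) <= e by lra.
rewrite norm2Z.
have [a0|an0] := eqVneq (norm2 a) 0.
  by rewrite a0 mulr0.
have -> : `|t^-1 - (norm2 a)^-1| * norm2 a = `|norm2 (t^-1 *: a) - norm2 x|.
  have tp : 0 < t^-1 by rewrite invr_gt0.
  rewrite norm2Z nx (gtr0_norm tp).
  have -> : t^-1 * norm2 a - 1 = (t^-1 - (norm2 a)^-1) * norm2 a by rewrite mulrBl mulVf.
  by rewrite normrM (ger0_norm (norm2_ge0 a)).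
by apply: (le_trans (rev_tri _ _ _)); rewrite norm2_sym.
Qed.

Lemma rnd_bounds (y : R) : y - 2^-1 < rnd y <= y + 2^-1.
Proof.
rewrite /rnd; have := floor_le (y + 2^-1); have := floorD1_gt (y + 2^-1).
rewrite intrD /=. set f := (Num.floor _)%:~R. move=> h1 h2.
apply/andP; split; lra.
Qed.

Lemma frac_abs (y : R) : `|y - rnd y| <= 2^-1.
Proof. have := rnd_bounds y; move=> /andP[h1 h2]; rewrite ler_norml; apply/andP; split; lra. Qed.

End Norm.

Definition zig (j : nat) : int := if odd j then (uphalf j)%:Z else - (uphalf j)%:Z.
Definition unzig (z : int) : nat := if (0 < z)%R then (`|z|%N.*2).-1 else (`|z|%N.*2).

Lemma abs_zig j : `|zig j|%N = uphalf j.
Proof. by rewrite /zig; case: (odd j) => //=; rewrite abszN. Qed.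

Lemma zig_eq0 j : (zig j == 0) = (j == 0%N).
Proof.
apply/idP/idP.
  move=> /eqP h; have := abs_zig j; rewrite h /= => /esym /eqP.
  by rewrite uphalfE; case: j {h} => // [] [].
by move=> /eqP ->.
Qed.

Lemma zigK z : zig (unzig z) = z.
Proof.
rewrite /unzig /zig; case: ltrP => hz.
  have [k hk] : exists k, `|z|%N = k.+1.
    by exists (`|z|.-1); rewrite prednK // absz_gt0 gt_eqF.
  have -> : (`|z|%N.*2).-1 = (k.*2).+1 by rewrite hk doubleS.
  rewrite !uphalfE -doubleS doubleK oddS odd_double /= -hk.
  by rewrite gtz0_abs.
rewrite odd_double /= uphalf_double.
by rewrite lez0_abs // opprK.
Qed.

Lemma unzig_lt z M : (`|z| <= M)%N -> (unzig z < 2 * M + 1)%N.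
Proof. rewrite /unzig -!mul2n; case: ifP => _ h; lia. Qed.

Lemma uphalf_unzig z : uphalf (unzig z) = `|z|%N.
Proof. by rewrite -abs_zig zigK. Qed.

Lemma unzig_eq0 z : (unzig z == 0%N) = (z == 0).
Proof. by rewrite -zig_eq0 zigK. Qed.


Section Count.
Variable R : realType.

Lemma geom_id (r : R) M :
  (1 - r) * \sum_(0 <= j < 2 * M + 1) r ^+ uphalf j = 1 + r - 2 * r ^+ M.+1.
Proof.
elim: M => [|M IH].
  by rewrite big_nat1 /= expr0 expr1 mulr1; ring.
have -> : (2 * M.+1 + 1 = (2 * M + 1).+2)%N by lia.
rewrite big_nat_recr //= big_nat_recr //= !mulrDr IH.
have -> : uphalf (2 * M + 1) = M.+1.
  by rewrite uphalfE addn1 mul2n -doubleS doubleK.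
have -> : ((2 * M + 1)./2.+1 = M.+1)%N.
  by rewrite addn1 mul2n -uphalfE uphalf_double.
rewrite !exprS; ring.
Qed.

Lemma geom_le (r : R) M : 0 <= r < 1 ->
  \sum_(j < 2 * M + 1) r ^+ uphalf j <= (1 + r) / (1 - r).
Proof.
move=> /andP[r0 r1]; have h := geom_id r M; rewrite big_mkord in h.
have p : 0 < 1 - r by lra.
rewrite ler_pdivlMr // mulrC h lerBlDr lerDl.
by rewrite mulr_ge0 // exprn_ge0.
Qed.

Lemma sum_if0 K (s : R) :
  \sum_(j < 2 * K + 1) (if (nat_of_ord j != 0)%N then s else 1) = 1 + (2 * K)%:R * s.
Proof.
have -> : (2 * K + 1 = (2 * K).+1)%N by lia.
rewrite big_ord_recl /= (eq_bigr (fun _ => s)) ?sumr_const ?card_ord ?mulr_natl //.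
Qed.

Lemma prod_const_ord n (c : R) : \prod_(i < n) c = c ^+ n.
Proof. by rewrite -(big_mkord xpredT (fun=> c)) prodr_const_nat subn0. Qed.

Definition Ttype (n M K : nat) := {ffun 'I_n -> 'I_(2 * M + 1) * 'I_(2 * K + 1)}.

Definition Pset (n M K m S : nat) : {set Ttype n M K} :=
  [set p : Ttype n M K | (\sum_(i < n) uphalf (p i).1 <= m)%N &&
     (#|[set i | (nat_of_ord (p i).2 != 0)%N]| <= S)%N].

Lemma card_Pset (n M K m S : nat) (r : R) : 0 < r < 1 -> (0 < K)%N ->
  #|Pset n M K m S|%:R <= (r^-1) ^+ m * ((2 * K)%:R) ^+ S * (2 * ((1 + r) / (1 - r))) ^+ n.
Proof.
move=> /andP[r0 r1] K0.
set s : R := ((2 * K)%:R)^-1.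
have Kp : 0 < (2 * K)%:R :> R by rewrite ltr0n; lia.
have s0 : 0 <= s by rewrite invr_ge0 ltW.
have s1 : s <= 1 by rewrite invf_le1 // ler1n; lia.
set g := fun (j : 'I_(2 * M + 1) * 'I_(2 * K + 1)) =>
  r ^+ uphalf j.1 * (if (nat_of_ord j.2 != 0)%N then s else 1).
have g0 : forall j, 0 <= g j.
  by move=> j; rewrite /g; apply: mulr_ge0; [exact: exprn_ge0 (ltW r0) | case: ifP].
set W := (r^-1) ^+ m * ((2 * K)%:R) ^+ S.
have W0 : 0 <= W by rewrite mulr_ge0 // exprn_ge0 // ?invr_ge0 ltW.
have lb : forall p, p \in Pset n M K m S -> 1 <= W * \prod_i g (p i).
  move=> p; rewrite inE => /andP[h1 h2].
  rewrite /g big_split /= prodrXr -big_mkcond /=.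
  have -> : \prod_(i < n | (nat_of_ord (p i).2 != 0)%N) s =
            s ^+ #|[set i | (nat_of_ord (p i).2 != 0)%N]|.
    by rewrite -prodr_const; apply: eq_bigl => i; rewrite inE.
  apply: (@le_trans _ _ (W * (r ^+ m * s ^+ S))).
    rewrite /W /s mulrACA -!exprMn mulVf ?gt_eqF // mulfV ?gt_eqF //.
    by rewrite !expr1n mulr1.
  rewrite ler_wpM2l //; apply: ler_pM.
  - exact: exprn_ge0 (ltW r0).
  - exact: exprn_ge0 s0.
  - exact: (ler_wiXn2l (ltW r0) (ltW r1)).
  - exact: (ler_wiXn2l s0 s1).
apply: (@le_trans _ _ (\sum_(p in Pset n M K m S) W * \prod_i g (p i))).
  by rewrite -sumr_const; apply: ler_sum => p pP; apply: lb.
apply: (@le_trans _ _ (\sum_(p : Ttype n M K) W * \prod_i g (p i))).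
  rewrite [X in _ <= X](bigID (mem (Pset n M K m S))) /= lerDl.
  by apply: sumr_ge0 => p _; rewrite mulr_ge0 // prodr_ge0.
rewrite -mulr_sumr ler_wpM2l //.
rewrite /Ttype -(bigA_distr_bigA (fun (i : 'I_n) j => g j)) /= prod_const_ord.
apply: lerXn2r.
- by rewrite nnegrE; apply: sumr_ge0 => j _; exact: g0.
- by rewrite nnegrE mulr_ge0 // divr_ge0; lra.
rewrite -(pair_bigA _ (fun j1 j2 => g (j1, j2))) /= /g /=.
rewrite (eq_bigr (fun (j1 : 'I_(2 * M + 1)) => r ^+ uphalf j1 * \sum_(j2 < 2 * K + 1)
   (if (nat_of_ord j2 != 0)%N then s else 1))); last by move=> j1 _; rewrite mulr_sumr.
rewrite -mulr_suml sum_if0 /s mulfV ?gt_eqF // mulrC.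
rewrite (_ : 1 + 1 = 2) //; rewrite ler_pM2l //.
by apply: geom_le; rewrite (ltW r0) r1.
Qed.

End Count.


Section Approx.
Context {R : realType}.

Lemma lcd_witness n (alpha beta B : R) (x : 'rV[R]_n) :
  (LCD alpha beta x < B%:E)%E -> exists D', lcd_set alpha beta x D' /\ D' < B.
Proof.
move=> /ereal_inf_lt [y [D' hD' <-]]; rewrite lte_fin => h.
by exists D'.
Qed.

Lemma lcd_lb n (alpha beta D' : R) (x : 'rV[R]_n) :
  lcd_set alpha beta x D' -> (LCD alpha beta x <= D'%:E)%E.
Proof. by move=> h; apply: ereal_inf_lbound; exists D'. Qed.

Lemma nat_le_real (k : nat) (y : R) : k%:R <= y -> (k <= Num.truncn y)%N.
Proof.
move=> h; have y0 : 0 <= y by apply: le_trans h; exact: ler0n.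
by rewrite truncn_ge_nat.
Qed.

Lemma absz_le (z : int) (K : nat) : `|z%:~R : R| <= K%:R -> (`|z| <= K)%N.
Proof. by rewrite -intr_norm -natr_absz ler_nat. Qed.

Lemma norm2_abs n (v : 'rV[R]_n) : norm2 (\row_i `|v ord0 i|) = norm2 v.
Proof.
by rewrite /norm2; congr Num.sqrt; apply: eq_bigr => i _; rewrite mxE real_normK ?num_real.
Qed.

Lemma fracvE n (x : 'rV[R]_n) i : fracv x ord0 i = x ord0 i - rnd (x ord0 i).
Proof. by rewrite /fracv mxE. Qed.

Lemma nnzZ n (c : R) (u : 'rV[R]_n) : c != 0 -> nnz (c *: u) = nnz u.
Proof.
move=> c0; rewrite /nnz; apply: eq_card => i; rewrite !inE mxE mulf_eq0.
by rewrite negb_or c0.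
Qed.

Lemma sqrt_ge (b : R) : 0 <= b <= 1 -> b <= Num.sqrt b.
Proof.
move=> /andP[b0 b1].
have s0 := sqrtr_ge0 b.
have s1 : Num.sqrt b <= 1 by rewrite -sqrtr1 ler_sqrt.
have := sqr_sqrtr b0; rewrite expr2 => e.
rewrite -{1}e; rewrite -[X in _ <= X]mulr1; exact: ler_wpM2l.
Qed.

Lemma small_D n (alpha beta D : R) (x : 'rV[R]_n) :
  0 < beta < 2^-1 -> D < 4^-1 -> S_D alpha beta D x -> False.
Proof.
move=> /andP[b0 b1] hD [sph lo hi [_ ninc]].
have [D' [[D'0 [u [v [ef [hu hv]]]]] D'lt]] : exists D', lcd_set alpha beta x D' /\ D' < 2^-1.
  apply: lcd_witness; apply: (le_lt_trans hi); rewrite lte_fin; lra.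
apply: ninc; exists (D'^-1 *: u), (D'^-1 *: v); split; [|split].
- have fe : fracv (D' *: x) = D' *: x.
    apply/rowP => i; rewrite fracvE /rnd.
    have hxi : `|x ord0 i| <= 1 by rewrite -sph; exact: coord_le.
    have hy : `|(D' *: x) ord0 i| < 2^-1.
      rewrite mxE normrM gtr0_norm //.
      apply: (le_lt_trans (ler_wpM2l (ltW D'0) hxi)); lra.
    have -> : Num.floor ((D' *: x) ord0 i + 2^-1) = 0.
      apply: floor_def; rewrite /= add0r.
      move: hy; rewrite ltr_norml => /andP[h1 h2]; apply/andP; split; lra.
    by rewrite subr0.
  move: ef; rewrite fe => /(congr1 (fun w => D'^-1 *: w)); rewrite scalerA mulVf ?gt_eqF // scale1r.
  by rewrite scalerDr.
- by rewrite nnzZ // invr_eq0 gt_eqF.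
- rewrite norm2Z gtr0_norm ?invr_gt0 //.
  apply: (le_trans (ler_wpM2l _ hv)); first by rewrite invr_ge0 ltW.
  have : Num.min D' (Num.sqrt n%:R) <= D' by rewrite ge_min lexx.
  move=> hm.
  apply: (@le_trans _ _ beta); last by apply: sqrt_ge; apply/andP; split; lra.
  have D'n : D' != 0 by rewrite gt_eqF.
  rewrite mulrCA; apply: (@le_trans _ _ (beta * 1)); last by rewrite mulr1.
  apply: ler_wpM2l; first exact: ltW b0.
  by rewrite -(mulVf D'n); apply: ler_wpM2l; [rewrite invr_ge0 ltW | rewrite ge_min lexx].
Qed.

End Approx.


Section Main.
Context {R : realType}.

Definition avec {n} (beta : R) {M K} (p : Ttype n M K) : 'rV[R]_n :=
  \row_i ((zig (p i).1)%:~R + beta * (zig (p i).2)%:~R).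
Definition center {n} (beta : R) {M K} (p : Ttype n M K) : 'rV[R]_n :=
  (norm2 (avec beta p))^-1 *: avec beta p.
Definition mpar (D : R) n : nat := Num.truncn (3 * D * Num.sqrt n%:R + n%:R).
Definition Kpar (beta : R) : nat := (Num.truncn beta^-1).+1.
Definition Spar (alpha : R) n : nat := Num.truncn (alpha * n%:R).

Lemma absz_le_trunc (z : int) (y : R) : `|z%:~R : R| <= y -> (`|z| <= Num.truncn y)%N.
Proof. by move=> h; apply: nat_le_real; rewrite natr_absz intr_norm. Qed.

Lemma approx n (alpha beta D : R) (x : 'rV[R]_n) : (0 < n)%N ->
  0 < beta < 2^-1 -> 0 < D -> S_D alpha beta D x ->
  exists2 p, p \in Pset n (mpar D n) (Kpar beta) (mpar D n) (Spar alpha n) &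
     norm2 (x - center beta p) <= 3 * beta * Num.sqrt n%:R / D.
Proof.
move=> n0 /andP[b0 b1] D0 [sph lo hi [_ _]].
have [D' [hset D'lt]] :
    exists D', lcd_set alpha beta x D' /\ D' < 3 * D.
  apply: lcd_witness; apply: (le_lt_trans hi); rewrite lte_fin; lra.
have DD' : D <= D'.
  by have := le_trans lo (lcd_lb _ _ _ _ _ hset); rewrite lee_fin.
case: hset => D'0 [u [v [ef [hu hv]]]].
have sn1 : 1 <= Num.sqrt n%:R :> R.
  by rewrite -[X in X <= _](@sqrtr1 R) ler_sqrt // ler1n.
have hxi : forall i, `|x ord0 i| <= 1 by move=> i; rewrite -sph; exact: coord_le.
set y := fun i => D' * x ord0 i.
set q := fun i => Num.floor (y i + 2^-1).
have rq : forall i, rnd (y i) = (q i)%:~R by [].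
have fuv : forall i, y i - (q i)%:~R = u ord0 i + v ord0 i.
  move=> i; have := congr1 (fun w : 'rV[R]_n => w ord0 i) ef.
  by rewrite /= fracvE mxE -rq mxE.
have fabs : forall i, `|y i - (q i)%:~R| <= 2^-1 by move=> i; rewrite -rq; exact: frac_abs.
have hyi : forall i, `|y i| <= D' * `|x ord0 i|.
  by move=> i; rewrite /y normrM gtr0_norm.
have hqi : forall i, `|(q i)%:~R : R| <= D' * `|x ord0 i| + 2^-1.
  move=> i; have -> : (q i)%:~R = y i - (y i - (q i)%:~R) by rewrite opprB addrC subrK.
  apply: (le_trans (ler_normB _ _)); apply: lerD; [exact: hyi | exact: fabs].
set k := fun i => if u ord0 i != 0 then Num.floor ((y i - (q i)%:~R) / beta + 2^-1) else 0.
have hqn : forall i, (`|q i| <= mpar D n)%N.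
  move=> i; apply: absz_le_trunc; apply: (le_trans (hqi i)).
  have : D' * `|x ord0 i| <= D'.
    by rewrite -[X in _ <= X]mulr1; apply: ler_wpM2l; [exact: ltW | exact: hxi].
  have : 1 <= n%:R :> R by rewrite ler1n.
  have : 3 * D <= 3 * D * Num.sqrt n%:R.
    by rewrite -[X in X <= _]mulr1; apply: ler_wpM2l => //; lra.
  lra.
have hkr : forall i, `|(k i)%:~R : R| <= (Kpar beta)%:R.
  move=> i; rewrite /k; case: ifP => _; last by rewrite normr0 ler0n.
  set t := (y i - (q i)%:~R) / beta.
  have bi : 0 < beta^-1 by rewrite invr_gt0.
  have ht : `|t| <= 2^-1 / beta by rewrite /t normrM (gtr0_norm bi) ler_pM2r // fabs i.
  have := rnd_bounds _ t; rewrite /rnd => /andP[r1 r2].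
  have hK := truncnS_gt (beta^-1).
  have e2 : 2^-1 / beta + 2^-1 <= beta^-1.
    have hb1 : 1 <= beta^-1 by rewrite invf_ge1 //; lra.
    lra.
  rewrite /Kpar; move: ht r1 r2 hK e2; rewrite ler_norml => /andP[t1 t2].
  set z := (Num.floor (t + 2^-1))%:~R; rewrite ler_norml; move=> r1 r2 hK e2.
  apply/andP; split; lra.
have hkn : forall i, (`|k i| <= Kpar beta)%N by move=> i; apply: absz_le; exact: hkr.
pose p : Ttype n (mpar D n) (Kpar beta) :=
  [ffun i => (Ordinal (@unzig_lt _ _ (hqn i)), Ordinal (@unzig_lt _ _ (hkn i)))].
set a : 'rV[R]_n := \row_i ((q i)%:~R + beta * (k i)%:~R).
have ha : avec beta p = a by apply/rowP => i; rewrite !mxE ffunE /= !zigK.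
have herr : forall i, `|(D' *: x - a) ord0 i| <= `|v ord0 i| + beta / 2.
  move=> i; rewrite !mxE -/(y i).
  have -> : y i - ((q i)%:~R + beta * (k i)%:~R) = (y i - (q i)%:~R) - beta * (k i)%:~R.
    by rewrite opprD addrA.
  rewrite /k; case: ifP => hu0.
    set t := (y i - (q i)%:~R) / beta.
    have -> : (y i - (q i)%:~R) - beta * (Num.floor (t + 2^-1))%:~R = beta * (t - rnd t).
      by rewrite /rnd /t mulrBr mulrCA mulfV ?gt_eqF // mulr1.
    rewrite normrM gtr0_norm //.
    have := frac_abs _ t; have := normr_ge0 (v ord0 i).
    move=> h1 h2; have : beta * `|t - rnd t| <= beta * 2^-1 by apply: ler_wpM2l => //; exact: ltW.
    lra.
  move/negbFE: hu0 => /eqP hu0.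
  rewrite mulr0 subr0 fuv hu0 add0r; have : 0 <= beta / 2 by apply: divr_ge0 => //; exact: ltW.
  lra.
have hvn : norm2 v <= beta * Num.sqrt n%:R.
  apply: (le_trans hv); apply: ler_wpM2l; first exact: ltW.
  by rewrite ge_min lexx orbT.
have hnorm : norm2 (D' *: x - a) <= 3 / 2 * beta * Num.sqrt n%:R.
  apply: (@le_trans _ _ (norm2 ((\row_i `|v ord0 i|) + \row_(i < n) (beta / 2)))).
    apply: norm2_le_abs => i; apply: (le_trans (herr i)).
    have hb2 : 0 <= `|v ord0 i| + beta / 2.
      by apply: addr_ge0 => //; apply: divr_ge0 => //; exact: ltW.
    by rewrite !mxE (ger0_norm hb2).
  apply: (le_trans (norm2_triangle _ _)); rewrite norm2_abs norm2_const.
  rewrite ger0_norm; last by apply: divr_ge0 => //; exact: ltW.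
  have : 0 <= Num.sqrt n%:R :> R by exact: sqrtr_ge0.
  move=> s0; have : beta / 2 * Num.sqrt n%:R = 2^-1 * (beta * Num.sqrt n%:R) by rewrite mulrAC mulrC.
  lra.
have h2 : norm2 (x - D'^-1 *: a) <= 3 / 2 * beta * Num.sqrt n%:R / D.
  have -> : x - D'^-1 *: a = D'^-1 *: (D' *: x - a).
    by rewrite scalerBr scalerA mulVf ?gt_eqF // scale1r.
  rewrite norm2Z gtr0_norm ?invr_gt0 // mulrC.
  apply: (@le_trans _ _ (3 / 2 * beta * Num.sqrt n%:R / D')).
    by apply: ler_wpM2r => //; rewrite invr_ge0 ltW.
  have c1 : 0 <= 3 / 2 * beta :> R by apply: mulr_ge0; [lra | exact: ltW].
  have c0 : 0 <= 3 / 2 * beta * Num.sqrt n%:R :> R by apply: mulr_ge0 => //; exact: sqrtr_ge0.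
  apply: ler_wpM2l => //.
  by rewrite lef_pV2 ?posrE.
exists p.
  rewrite inE; apply/andP; split.
    rewrite (eq_bigr (fun i => `|q i|%N)); last by move=> i _; rewrite ffunE /= uphalf_unzig.
    apply: nat_le_real; rewrite natr_sum.
    apply: (@le_trans _ _ (\sum_(i < n) (D' * `|x ord0 i| + 2^-1))).
      by apply: ler_sum => i _; rewrite natr_absz intr_norm; exact: hqi.
    rewrite big_split /= -mulr_sumr sumr_const card_ord.
    have hs := sum_abs_le x; rewrite sph mulr1 in hs.
    have : D' * \sum_(i < n) `|x ord0 i| <= D' * Num.sqrt n%:R by apply: ler_wpM2l => //; exact: ltW.
    have : D' * Num.sqrt n%:R <= 3 * D * Num.sqrt n%:R.
      by apply: ler_wpM2r; [exact: sqrtr_ge0 | exact: ltW].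
    have : 2^-1 *+ n = 2^-1 * n%:R :> R by rewrite mulr_natr.
    have : 0 <= n%:R :> R by exact: ler0n.
    lra.
  apply: (@leq_trans (nnz u)); last by apply: nat_le_real.
  rewrite /nnz; apply: subset_leq_card. apply/fintype.subsetP => i; rewrite !inE ffunE /=.
  rewrite unzig_eq0 /k; case: ifP => //; by rewrite eqxx.
rewrite /center ha.
have := normalize_close _ _ _ a _ _ sph D'0 h2.
have e3 : 2 * 3 * 2^-1 = 3 :> R by rewrite mulrAC mulfV // mul1r.
have -> : 2 * (3 / 2 * beta * Num.sqrt n%:R / D) = 3 * beta * Num.sqrt n%:R / D :> R by rewrite !mulrA e3.
by [].
Qed.
End Main.


Section Numeric.
Context {R : realType}.

Lemma expR1_le4 : expR 1 <= 4 :> R.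
Proof.
have h := expR_ge1Dx (- 2^-1 : R).
have p := expR_gt0 (2^-1 : R).
have e1 : expR (1 : R) = expR 2^-1 * expR 2^-1 by rewrite -expRD; congr expR; lra.
have e2 : expR (- 2^-1 : R) = (expR 2^-1)^-1 by rewrite expRN.
rewrite e2 in h.
have h2 : expR (2^-1 : R) <= 2.
  have : 2^-1 <= (expR (2^-1 : R))^-1 by lra.
  by rewrite lef_pV2 ?posrE.
rewrite e1; have : 0 <= expR (2^-1 : R) by exact: ltW.
nra.
Qed.

Lemma pow_bound (m n : nat) : (0 < m)%N ->
  ((m%:R / (m + n)%:R)^-1) ^+ m <= 4 ^+ n :> R.
Proof.
move=> m0.
have mp : 0 < m%:R :> R by rewrite ltr0n.
have -> : (m%:R / (m + n)%:R)^-1 = 1 + n%:R / m%:R :> R.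
  rewrite invf_div natrD; field; rewrite gt_eqF //.
apply: (@le_trans _ _ (expR (n%:R / m%:R) ^+ m)).
  apply: lerXn2r; [|by rewrite nnegrE expR_ge0|exact: expR_ge1Dx].
  by rewrite nnegrE; apply: addr_ge0 => //; apply: divr_ge0.
rewrite -expRM_natl mulrC mulfVK ?gt_eqF // -[n%:R]mul1r expRM_natr.
by apply: lerXn2r; [rewrite nnegrE expR_ge0 | rewrite nnegrE; lra | exact: expR1_le4].
Qed.

Lemma ratio_eq (m n : nat) : (0 < n)%N ->
  (1 + m%:R / (m + n)%:R) / (1 - m%:R / (m + n)%:R) = (2 * m%:R + n%:R) / n%:R :> R.
Proof.
move=> n0; have np : 0 < n%:R :> R by rewrite ltr0n.
have mnp : 0 < (m + n)%:R :> R by rewrite ltr0n; lia.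
rewrite natrD in mnp *; field.
by apply/andP; split; rewrite gt_eqF //.
Qed.

End Numeric.



Section Helpers.
Context {R : realType}.

Lemma six_split (b s D : R) : 6 * b * s / D = 3 * b * s / D + 3 * b * s / D.
Proof. rewrite -!mulrA; set w := b * _; lra. Qed.

Lemma e432 (D sa : R) : 432 * D / sa = 2 * (216 * (D / sa)).
Proof. rewrite -!mulrA; set w := D * _; lra. Qed.

Lemma pow2_ge (n : nat) : (0 < n)%N -> 2 <= 2 ^+ n :> R.
Proof.
move=> n1; have o2 : 1 <= 2 :> R by lra.
rewrite -(prednK n1) exprS; have := exprn_ege1 n.-1 o2; lra.
Qed.

Lemma final_step (a b X : R) : 0 <= X -> 2^-1 <= a -> 2 <= b -> X <= a * (b * X).
Proof.
move=> X0 ha hb; have ab : 1 <= a * b by nra.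
by rewrite mulrA; exact: ler_peMl X0 ab.
Qed.

Lemma half_le (D beta : R) : 0 < beta -> beta < 2^-1 -> 4^-1 <= D -> 2^-1 <= D / beta.
Proof. move=> b0 b1 hD; rewrite ler_pdivlMr //; lra. Qed.

End Helpers.

Section CountHelpers.
Context {R : realType}.

Lemma m_le (D : R) n : 0 < D -> (mpar D n)%:R <= 3 * D * Num.sqrt n%:R + n%:R.
Proof.
move=> D0; rewrite /mpar truncn_le; apply: addr_ge0; last exact: ler0n.
apply: mulr_ge0; last exact: sqrtr_ge0.
by apply: mulr_ge0; [rewrite ler0n | exact: ltW].
Qed.

Lemma m_pos (D : R) n : (0 < n)%N -> 0 < D -> (0 < mpar D n)%N.
Proof.
move=> n0 D0; rewrite /mpar truncn_ge_nat.
  have h1 : 0 <= 3 * D * Num.sqrt (n%:R : R).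
    apply: mulr_ge0; last exact: sqrtr_ge0.
    by apply: mulr_ge0; [rewrite ler0n | exact: ltW].
  have h2 : 1 <= n%:R :> R by rewrite ler1n.
  move: h1 h2; set a := 3 * _; move=> h1 h2; lra.
apply: addr_ge0; last exact: ler0n.
apply: mulr_ge0; last exact: sqrtr_ge0.
by apply: mulr_ge0; [rewrite ler0n | exact: ltW].
Qed.

Lemma inv_ge2 (beta : R) : 0 < beta -> beta < 2^-1 -> 2 <= beta^-1.
Proof.
move=> b0 b1; have e : beta * beta^-1 = 1 by rewrite mulfV // gt_eqF.
have p : 0 < beta^-1 by rewrite invr_gt0.
move: e p; set w := beta^-1 => e p; nra.
Qed.

Lemma K2_le (beta : R) : 0 < beta -> beta < 2^-1 -> (2 * Kpar beta)%:R <= 3 * beta^-1 :> R.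
Proof.
move=> b0 b1; have := inv_ge2 _ b0 b1.
rewrite natrM /Kpar -addn1 natrD.
have ht : (Num.truncn beta^-1)%:R <= beta^-1 :> R by rewrite truncn_le invr_ge0 ltW.
move: ht; set t := (Num.truncn _)%:R; set w := beta^-1 => ht hw; lra.
Qed.

Lemma B_bound (alpha beta : R) n : 0 < alpha -> alpha < 1 -> 0 < beta -> beta < 2^-1 ->
  ((2 * Kpar beta)%:R) ^+ (Spar alpha n) <= 3 ^+ n * powR (beta^-1) (alpha * n%:R) :> R.
Proof.
move=> a0 a1 b0 b1.
have an0 : 0 <= alpha * n%:R by apply: mulr_ge0; [exact: ltW | exact: ler0n].
have K1 : 1 <= (2 * Kpar beta)%:R :> R by rewrite ler1n /Kpar; lia.
have K2 := K2_le _ b0 b1.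
have bi0 : 0 <= beta^-1 by rewrite invr_ge0 ltW.
rewrite -powR_mulrn; last by apply: le_trans K1; exact: ler01.
apply: (@le_trans _ _ (powR ((2 * Kpar beta)%:R) (alpha * n%:R))).
  by apply: ler_powR => //; rewrite /Spar truncn_le.
apply: (@le_trans _ _ (powR (3 * beta^-1) (alpha * n%:R))).
  apply: ge0_ler_powR => //; rewrite nnegrE; first by apply: le_trans K1; exact: ler01.
  by apply: mulr_ge0 => //; rewrite ler0n.
have h3 : 0 <= 3 :> R by lra.
rewrite (powRM _ h3 bi0).
apply: ler_wpM2r; first exact: powR_ge0.
rewrite -powR_mulrn //.
apply: ler_powR; first by lra.
rewrite -[X in _ <= X]mul1r; apply: ler_wpM2r; [exact: ler0n | exact: ltW].
Qed.

Lemma C_bound (D sa : R) (n m : nat) : (0 < n)%N -> 0 < sa -> sa <= D ->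
  sa <= Num.sqrt n%:R -> m%:R <= 3 * D * Num.sqrt n%:R + n%:R ->
  2 * ((2 * m%:R + n%:R) / n%:R) <= 18 * (D / sa).
Proof.
move=> n0 sap saD sas mle.
have Np : 0 < n%:R :> R by rewrite ltr0n.
have D0 : 0 < D by apply: lt_le_trans saD.
move: sas mle; set s := Num.sqrt (n%:R : R) => sas mle.
have s0 : 0 <= s by exact: sqrtr_ge0.
have ss : s * s = n%:R by rewrite -expr2 sqr_sqrtr // ler0n.
set Q := D / sa.
set u := (2 * m%:R + n%:R) / n%:R.
have hu : u * n%:R = 2 * m%:R + n%:R by rewrite /u mulfVK // gt_eqF.
have hQ : Q * sa = D by rewrite /Q mulfVK // gt_eqF.
suff : u * (n%:R * sa) <= 9 * Q * (n%:R * sa).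
  rewrite ler_pM2r ?mulr_gt0 //; move: (u) (Q) => a b h; lra.
have f1 : s * sa <= n%:R by rewrite -ss; apply: ler_wpM2l.
have f2 : n%:R * sa <= n%:R * D by apply: ler_wpM2l => //; exact: ltW.
have f3 : (2 * m%:R + n%:R) * sa <= (2 * (3 * D * s + n%:R) + n%:R) * sa.
  by apply: ler_wpM2r; [exact: ltW | move: mle; set a := 3 * D * s; move=> h; lra].
have f4 : D * (s * sa) <= D * n%:R by apply: ler_wpM2l => //; exact: ltW.
have e1 : u * (n%:R * sa) = (2 * m%:R + n%:R) * sa by rewrite mulrA hu.
have e2 : 9 * Q * (n%:R * sa) = 9 * (n%:R * D) by rewrite -hQ; ring.
have e3 : (2 * (3 * D * s + n%:R) + n%:R) * sa = 6 * (D * (s * sa)) + 3 * (n%:R * sa) by ring.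
rewrite e1 e2; rewrite e3 in f3.
move: f2 f3 f4; rewrite (mulrC D n%:R).
set X := (2 * m%:R + n%:R) * sa; set Y := D * (s * sa); set Z := n%:R * sa; set W := n%:R * D.
move=> f2 f3 f4; lra.
Qed.

End CountHelpers.

Lemma count_bound (R : realType) (n : nat) (alpha beta D : R) :
  (0 < n)%N -> 0 < alpha < 1 -> 0 < beta < 2^-1 ->
  Num.sqrt (alpha * n%:R) <= D ->
  #|Pset n (mpar D n) (Kpar beta) (mpar D n) (Spar alpha n)|%:R <=
  (216 * (D / Num.sqrt (alpha * n%:R))) ^+ n * powR (beta^-1) (alpha * n%:R).
Proof.
move=> n0 /andP[a0 a1] /andP[b0 b1] hD.
have sap : 0 < Num.sqrt (alpha * n%:R) by rewrite sqrtr_gt0 mulr_gt0 // ltr0n.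
have D0 : 0 < D by apply: lt_le_trans hD.
have m0 := m_pos _ _ n0 D0.
set m := mpar D n.
have mp : 0 < m%:R :> R by rewrite ltr0n.
set r : R := m%:R / (m + n)%:R.
have mnp : 0 < (m + n)%:R :> R by rewrite ltr0n addn_gt0 m0.
have r0 : 0 < r by apply: divr_gt0.
have r1 : r < 1 by rewrite /r ltr_pdivrMr // mul1r ltr_nat -[X in (X < _)%N]addn0 ltn_add2l.
have K0 : (0 < Kpar beta)%N by [].
have hc := @card_Pset R n m (Kpar beta) m (Spar alpha n) r (introT andP (conj r0 r1)) K0.
apply: (le_trans hc).
have hA : (r^-1) ^+ m <= 4 ^+ n := pow_bound _ _ m0.
have hB := B_bound _ _ n a0 a1 b0 b1.
have sas : Num.sqrt (alpha * n%:R) <= Num.sqrt n%:R.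
  by rewrite ler_sqrt ?ler0n // ger_pMl ?ltr0n //; exact: ltW.
have hC : (2 * ((1 + r) / (1 - r))) ^+ n <= (18 * (D / Num.sqrt (alpha * n%:R))) ^+ n.
  have c0 : 0 <= 2 * ((1 + r) / (1 - r)).
    apply: mulr_ge0; first exact: ler0n.
    by apply: divr_ge0; move: r0 r1; set z := r => r0 r1; lra.
  apply: lerXn2r; first by rewrite nnegrE.
    rewrite nnegrE; apply: mulr_ge0; first by lra.
    by apply: divr_ge0; exact: ltW.
  rewrite /r ratio_eq //.
  exact: (C_bound _ _ _ _ n0 sap hD sas (m_le _ n D0)).
have A0 : 0 <= (r^-1) ^+ m by apply: exprn_ge0; rewrite invr_ge0 ltW.
have B0 : 0 <= ((2 * Kpar beta)%:R) ^+ (Spar alpha n) :> R by apply: exprn_ge0; exact: ler0n.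
have pw0 := powR_ge0 (beta^-1) (alpha * n%:R).
apply: (@le_trans _ _ (4 ^+ n * (3 ^+ n * powR (beta^-1) (alpha * n%:R)) *
                      (18 * (D / Num.sqrt (alpha * n%:R))) ^+ n)).
  apply: ler_pM; [exact: mulr_ge0 | | | exact: hC].
    apply: exprn_ge0; apply: mulr_ge0; first exact: ler0n.
    by apply: divr_ge0; move: r0 r1; set z := r => r0 r1; lra.
  by apply: ler_pM.
set Q := D / _; set pw := powR _ _.
have -> : 216 * Q = 4 * 3 * (18 * Q) by ring.
by rewrite !exprMn le_eqVlt; apply/orP; left; apply/eqP; ring.
Qed.


Theorem claim6p2 (R : realType) :
  exists c : R, 0 < c /\
  forall (n : nat) (alpha beta D : R),
    (1 <= n)%N -> 0 < alpha < 1 -> 0 < beta < 2^-1 ->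
    Num.sqrt (alpha * n%:R) <= D ->
    exists N : seq 'rV[R]_n,
      (forall y, y \in N -> S_D alpha beta D y) /\
      (forall x, S_D alpha beta D x ->
         exists2 y, y \in N & norm2 (x - y) <= 6 * beta * Num.sqrt n%:R / D) /\
      (size N)%:R <= D / beta * (c * D / Num.sqrt (alpha * n%:R)) ^+ n
                     * powR (beta^-1) (alpha * n%:R).
Proof.
exists 432; split; first by rewrite ltr0n.
move=> n alpha beta D n1 ha hb hD.
have /andP[a0 a1] := ha; have /andP[b0 b1] := hb.
have sa : 0 < Num.sqrt (alpha * n%:R) by rewrite sqrtr_gt0 mulr_gt0 // ltr0n.
have D0 : 0 < D by apply: lt_le_trans hD.
have Q1 : 1 <= D / Num.sqrt (alpha * n%:R) by rewrite ler_pdivlMr // mul1r.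
have pw0 : 0 <= powR (beta^-1) (alpha * n%:R) by exact: powR_ge0.
have bnd0 : 0 <= D / beta * (432 * D / Num.sqrt (alpha * n%:R)) ^+ n
                     * powR (beta^-1) (alpha * n%:R).
  apply: mulr_ge0; last exact: pw0.
  apply: mulr_ge0; first by apply: divr_ge0; exact: ltW.
  apply: exprn_ge0; apply: divr_ge0; last exact: ltW sa.
  by apply: mulr_ge0; [rewrite ler0n | exact: ltW D0].
case: (ltP D 4^-1) => hD4.
  exists [::]; split; first by move=> y; rewrite in_nil.
  split; last by rewrite /=.
  by move=> x hx; exfalso; exact: (small_D _ _ _ _ _ hb hD4 hx).
set P := Pset n (mpar D n) (Kpar beta) (mpar D n) (Spar alpha n).
set nu2 := 3 * beta * Num.sqrt n%:R / D.
pose pick (p : Ttype n (mpar D n) (Kpar beta)) : option 'rV[R]_n :=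
  match pselect (exists y, S_D alpha beta D y /\ norm2 (y - center beta p) <= nu2) with
  | left h => Some (proj1_sig (cid h))
  | right _ => None
  end.
have pickP : forall p y, pick p = Some y -> S_D alpha beta D y /\ norm2 (y - center beta p) <= nu2.
  move=> p y; rewrite /pick; case: pselect => // h [<-].
  exact: (proj2_sig (cid h)).
exists (pmap pick (enum P)); split.
  move=> y; rewrite mem_pmap => /mapP[p _ e].
  by have [] := pickP p y (esym e).
split.
  move=> x hx.
  have [p pP hp] := approx _ _ _ _ _ n1 hb D0 hx.
  have : exists y, S_D alpha beta D y /\ norm2 (y - center beta p) <= nu2 by exists x.
  move=> ex.
  have [y ey] : exists y, pick p = Some y.
    rewrite /pick; case: pselect => h; first by exists (proj1_sig (cid h)).
    by exfalso; apply: h.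
  have [yS yd] := pickP p y ey.
  exists y.
    by rewrite mem_pmap; apply/mapP; exists p; [rewrite mem_enum | rewrite ey].
  have -> : x - y = (x - center beta p) + (center beta p - y) by rewrite addrA subrK.
  apply: (le_trans (norm2_triangle _ _)); rewrite (norm2_sym (center beta p)).
  rewrite /nu2 six_split.
  by apply: lerD.
apply: (@le_trans _ _ (#|P|%:R)).
  by rewrite ler_nat size_pmap cardE count_size.
apply: (le_trans (count_bound _ _ _ _ _ n1 ha hb hD)).
rewrite e432 [(2 * _) ^+ n]exprMn.
have X0 : 0 <= (216 * (D / Num.sqrt (alpha * n%:R))) ^+ n.
  by apply: exprn_ge0; apply: mulr_ge0 => //; apply: le_trans Q1.
apply: ler_wpM2r => //.
by apply: final_step => //; [exact: half_le | exact: pow2_ge].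
Qed.
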